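(* As $N\to\infty$, $$\sum_{k=1}^{N}\varphi(k)\,I_N\!\left(\frac{1}{k}\right)=\frac{N^3}{6\zeta(3)}+O\!\left(\frac{N^3}{\log N}\right),$$ i.e. there is a constant $C$ such that for all integers $N\ge 2$, $\left|\sum_{k=1}^{N}\varphi(k)I_N(1/k)-\frac{N^3}{6\zeta(3)}\right|\le C\,\frac{N^3}{\log N}$.
   Context: $\varphi$ is Euler's totient function and $\zeta$ is the Riemann zeta function. For a positive integer $N$, the Farey sequence of order $N$, $F_N$, is the increasing list of all reduced fractions $h/k$ with $0\le h\le k\le N$ and $\gcd(h,k)=1$; it begins with $0/1$ and ends with $1/1$. For $x\in F_N$, $I_N(x)$ denotes the position of $x$ in $F_N$, indexed starting from $1$ (so $I_N(0/1)=1$ and $I_N(1/1)=|F_N|$). *)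

(* Defs.v *)
From mathcomp Require Import all_boot.
From Stdlib Require Import Reals.

(* I_N(h/k): the 1-based position of h/k in the Farey sequence F_N, i.e. the number
   of reduced fractions a/b with 0 <= a <= b <= N, gcd(a,b) = 1 and a/b <= h/k
   (comparison a/b <= h/k written as a*k <= h*b, valid for b,k > 0). *)
Definition farey_index (N h k : nat) : nat :=
  \sum_(1 <= b < N.+1) \sum_(0 <= a < b.+1) nat_of_bool (coprime a b && (a * k <= h * b)).

Definition zeta3_term (n : nat) : R := Rinv (pow (INR n.+1) 3).

(* Main.v *)
Require Import Defs.
From mathcomp Require Import all_boot all_solvable zify.
Set Implicit Arguments. Unset Strict Implicit.

Definition Phi (m : nat) : nat := \sum_(1 <= k < m.+1) totient k.

Lemma widen_le (f : nat -> nat) m n : m <= n ->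
  \sum_(1 <= i < n.+1 | i <= m) f i = \sum_(1 <= i < m.+1) f i.
Proof.
move=> le; rewrite [RHS](big_nat_widen _ _ _ _ _ (_ : m.+1 <= n.+1)) //.
Qed.

Lemma sum_div_count k n : 0 < k ->
  \sum_(1 <= a < n.+1 | a * k <= n) 1 = n %/ k.
Proof.
move=> k0.
rewrite (eq_bigl (fun a => a <= n %/ k)); last by move=> a; rewrite leq_divRL.
by rewrite widen_le ?leq_div // sum_nat_const_nat subn1 muln1.
Qed.

Lemma q_exchange n :
  \sum_(0 <= a < n.+1) Phi (n %/ a) = \sum_(1 <= k < n.+1) totient k * (n %/ k).
Proof.
rewrite big_nat_recl // divn0 /Phi big_geq // add0n.
transitivity (\sum_(0 <= a < n) \sum_(1 <= k < n.+1 | k * a.+1 <= n) totient k).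
  apply: eq_bigr => a _.
  rewrite [RHS](eq_bigl (fun k => k <= n %/ a.+1)); last by move=> k; rewrite leq_divRL.
  by rewrite widen_le // leq_div.
under eq_bigr do rewrite big_mkcond.
rewrite exchange_big; apply: eq_big_nat => k /andP[k1 _].
rewrite -sum_div_count // big_distrr /= muln1.
rewrite big_add1 /= [RHS]big_mkcond; apply: eq_bigr => a _.
by rewrite mulnC.
Qed.

Lemma q_tri n : \sum_(0 <= a < n.+1) Phi (n %/ a) = \sum_(0 <= i < n.+1) i.
Proof.
rewrite q_exchange; elim: n => [|n IH]; first by rewrite big_geq // big_nat1.
rewrite big_nat_recr //= [RHS]big_nat_recr //= -IH.
have -> : n.+1 %/ n.+1 = 1 by rewrite divnn.
rewrite muln1.
have E : \sum_(1 <= k < n.+1) totient k * (n.+1 %/ k) =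
   \sum_(1 <= k < n.+1) totient k * (n %/ k) + \sum_(1 <= k < n.+1) (if k %| n.+1 then totient k else 0).
  rewrite -big_split; apply: eq_big_nat => k /andP[k1 _].
  by rewrite divnS //= mulnDr; case: (k %| n.+1); rewrite /= ?muln1 ?muln0 addnC.
rewrite E -addnA; congr (_ + _).
have H := sum_totient_dvd n.+1.
rewrite big_mkcond /= -(big_mkord xpredT (fun i => if i %| n.+1 then totient i else 0)) big_nat_recl //= in H.
rewrite add0n big_nat_recr //= dvdnn in H.
by rewrite -[RHS]H big_add1.
Qed.
Lemma mult_reindex (F : nat -> nat) (Q : pred nat) g m : 0 < g ->
  \sum_(0 <= a < (g * m).+1 | (g %| a) && Q (a %/ g)) F a =
  \sum_(0 <= a < m.+1 | Q a) F (g * a).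
Proof.
move=> g0; elim: m => [|m IH].
  by rewrite muln0 big_mkcond big_nat1 [RHS]big_mkcond big_nat1 /= dvdn0 div0n muln0.
rewrite (big_cat_nat _ (n := (g * m).+1)) //=; last by rewrite ltnS leq_mul2l leqnSn orbT.
rewrite IH [RHS]big_mkcond big_nat_recr //= -big_mkcond /=; congr (_ + _).
rewrite big_mkcond big_nat_recr /=; last by rewrite mulnS; lia.
rewrite [X in X + _]big_nat_cond big1 ?add0n; last first.
  move=> a /andP[/andP[h1 h2] _]; case: ifP => // /andP[/dvdnP[k E] _].
  rewrite E in h1 h2; move: h1 h2; rewrite mulnC ltn_pmul2r // [k * g]mulnC ltn_pmul2l //; lia.
by rewrite dvdn_mulr // mulKn.
Qed.

Lemma gcd_partition (F : nat -> nat) n : 0 < n ->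
  \sum_(0 <= a < n.+1) F a =
  \sum_(0 <= g < n.+1 | g %| n) \sum_(0 <= a < (n %/ g).+1 | coprime a (n %/ g)) F (g * a).
Proof.
move=> n0.
have gl a : gcdn a n < n.+1 by rewrite ltnS dvdn_leq // dvdn_gcdr.
rewrite (partition_big (fun a => (inord (gcdn a n) : 'I_n.+1)) (fun j : 'I_n.+1 => (j : nat) %| n)); last first.
  by move=> a _; rewrite inordK // dvdn_gcdr.
rewrite [RHS]big_mkord; apply: eq_bigr => g gn.
have g0 : 0 < (g : nat) by case: (g : nat) gn => //; rewrite dvd0n => /eqP n00; rewrite n00 in n0.
have E : n = g * (n %/ g) by rewrite mulnC divnK.
rewrite -(mult_reindex F (fun a => coprime a (n %/ g)) _ g0) -E.
apply: eq_bigl => a.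
rewrite -val_eqE /= inordK //.
have gcdE : (g : nat) %| a -> gcdn a n = g * gcdn (a %/ g) (n %/ g).
  by move=> dga; rewrite muln_gcdr !(mulnC (g : nat)) !divnK.
apply/eqP/andP.
  move=> ga; have dga : (g : nat) %| a by rewrite -ga dvdn_gcdl.
  split=> //; rewrite /coprime.
  move: ga; rewrite gcdE // -[X in _ = X](muln1 g) => /eqP.
  by rewrite eqn_pmul2l.
case=> dga cop; rewrite gcdE //.
by rewrite (eqP cop) muln1.
Qed.

Definition p (m : nat) : nat := \sum_(0 <= a < m.+1 | coprime a m) Phi (m %/ a).
Definition P (N : nat) : nat := \sum_(1 <= b < N.+1) p b.

Lemma q_p n : 0 < n -> \sum_(0 <= i < n.+1) i = \sum_(0 <= g < n.+1 | g %| n) p (n %/ g).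
Proof.
move=> n0; rewrite -q_tri (gcd_partition (fun a => Phi (n %/ a)) n0).
apply: eq_bigr => g _; apply: eq_bigr => a _; by rewrite divnMA.
Qed.

Lemma P_step N g : P (N.+1 %/ g) = P (N %/ g) + (if g %| N.+1 then p (N.+1 %/ g) else 0).
Proof.
case: g => [|g]; first by rewrite !divn0 dvd0n addn0.
rewrite divnS //; case: (g.+1 %| N.+1); rewrite ?add0n ?addn0 //.
by rewrite add1n /P big_nat_recr.
Qed.

Lemma stepD N : \sum_(0 <= g < N.+1) P (N %/ g) = \sum_(0 <= n < N.+1) \sum_(0 <= i < n.+1) i.
Proof.
elim: N => [|N IH]; first by rewrite !big_nat1 divn0 /P big_geq.
rewrite [RHS]big_nat_recr //= -IH.
rewrite (eq_bigr _ (fun g _ => P_step N g)).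
rewrite big_split /= big_nat_recr //= divn_small //.
have -> : P 0 = 0 by rewrite /P big_geq.
rewrite addn0.
by rewrite -big_mkcond (q_p (ltn0Sn N)).
Qed.

Lemma sumK a b N : 0 < a -> b <= N ->
  \sum_(1 <= k < N.+1) totient k * nat_of_bool (a * k <= b) = Phi (b %/ a).
Proof.
move=> a0 bN.
rewrite /Phi -(widen_le _ (_ : b %/ a <= N)); last by apply: leq_trans (leq_div _ _) bN.
rewrite [RHS]big_mkcond /=; apply: eq_bigr => k _.
rewrite leq_divRL // [k * a]mulnC; case: (a * k <= b); by rewrite ?muln1 ?muln0.
Qed.

Lemma sum0 N : \sum_(1 <= k < N.+1) totient k * nat_of_bool (0 * k <= 0) = Phi N.
Proof. by apply: eq_bigr => k _; rewrite muln1. Qed.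

Lemma stepA N : 0 < N ->
  \sum_(1 <= k < N.+1) totient k * farey_index N 1 k = P N + Phi N.
Proof.
move=> N0; rewrite /farey_index.
under eq_bigr => k _ do rewrite big_distrr /=.
rewrite exchange_big /=.
under eq_bigr => b _ do (under eq_bigr => k _ do rewrite big_distrr /=; rewrite exchange_big /=).
transitivity (\sum_(1 <= b < N.+1) (p b + (if b == 1 then Phi N else 0))).
  apply: eq_big_nat => b /andP[b1 bN].
  rewrite (big_nat_recl b) // /p (big_mkcond (fun a => coprime a b)) (big_nat_recl b) //= divn0.
  have -> : Phi 0 = 0 by rewrite /Phi big_geq.
  rewrite if_same add0n addnC; congr (_ + _).
    apply: eq_big_nat => a /andP[_ ab].
    case: ifP => cop.
      rewrite -(sumK (a := a.+1) (b := b) (N := N)) // //.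
      by apply: eq_bigr => k _; rewrite mul1n.
    by rewrite big1 // => k _; rewrite /= muln0.
  rewrite /coprime gcd0n; case: eqP => [-> | _].
    by rewrite -(sum0 N); apply: eq_bigr => k _; rewrite muln1.
  by rewrite big1 // => k _; rewrite muln0.
rewrite big_split /=; congr (_ + _).
case: N N0 => // N _; rewrite big_nat_recl // eqxx big_nat_cond big1 ?addn0 // => -[|i] /andP[/andP[i1 _] _] //.
Qed.

Definition T (N : nat) : nat := \sum_(0 <= n < N.+1) \sum_(0 <= i < n.+1) i.

Lemma tri2 n : 2 * \sum_(0 <= i < n.+1) i = n * n.+1.
Proof.
elim: n => [|n IH]; first by rewrite big_nat1.
rewrite big_nat_recr //= mulnDr IH; lia.
Qed.

Lemma T6 N : 6 * T N = N * N.+1 * N.+2.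
Proof.
rewrite /T; elim: N => [|N IH]; first by rewrite big_nat1 big_nat1.
rewrite big_nat_recr //= mulnDr IH.
have := tri2 N.+1; lia.
Qed.

Lemma totient_le k : totient k <= k.
Proof.
rewrite totient_count_coprime.
apply: leq_trans (_ : \sum_(0 <= d < k) 1 <= k).
  by apply: leq_sum => i _; case: (coprime k i).
by rewrite sum_nat_const_nat subn0 muln1.
Qed.

Lemma Phi_le N : Phi N <= N * N.
Proof.
rewrite /Phi; apply: leq_trans (_ : \sum_(1 <= k < N.+1) N <= N * N).
  rewrite big_nat_cond [X in _ <= X]big_nat_cond; apply: leq_sum => k /andP[/andP[_ kN] _]; apply: leq_trans (totient_le k) _; lia.
by rewrite sum_nat_const_nat subn1 mulnC.
Qed.

Lemma P0 : P 0 = 0.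
Proof. by rewrite /P big_geq. Qed.

Lemma stepD' N : \sum_(0 <= i < N) P (N %/ i.+1) = T N.
Proof.
by rewrite /T -stepD big_nat_recl // divn0 P0 add0n.
Qed.
Require Import Defs.
From mathcomp Require Import all_boot zify.
From Stdlib Require Import Reals Lra Psatz.
Local Open Scope R_scope.
Unset Implicit Arguments.

Fixpoint rs (f : nat -> R) (n : nat) : R :=
  match n with O => 0 | S k => rs f k + f k end.

Lemma rs_shift f n : rs f (S n) = f O + rs (fun i => f (S i)) n.
Proof. induction n as [|n IH]; simpl in *; [lra|]. rewrite IH; lra. Qed.

Lemma rs_le f g n : (forall i, (i < n)%coq_nat -> f i <= g i) -> rs f n <= rs g n.
Proof.
induction n as [|n IH]; intros H; simpl; [lra|].
assert (f n <= g n) by (apply H; lia).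
assert (rs f n <= rs g n) by (apply IH; intros; apply H; lia). lra.
Qed.

Lemma rs_scal c f n : rs (fun i => c * f i) n = c * rs f n.
Proof. induction n as [|n IH]; simpl; [ring|]. rewrite IH; ring. Qed.

Lemma rs_minus f g n : rs (fun i => f i - g i) n = rs f n - rs g n.
Proof. induction n as [|n IH]; simpl; [ring|]. rewrite IH; ring. Qed.

Lemma rs_abs f n : Rabs (rs f n) <= rs (fun i => Rabs (f i)) n.
Proof.
induction n as [|n IH]; simpl. rewrite Rabs_R0; lra.
eapply Rle_trans. apply Rabs_triang. lra.
Qed.

Lemma rs_sum f n : rs f (S n) = sum_f_R0 f n.
Proof. induction n as [|n IH]; simpl in *; [lra|]. rewrite <- IH; simpl; lra. Qed.

Lemma INR_sum (F : nat -> nat) n : INR (\sum_(0 <= i < n) F i) = rs (fun i => INR (F i)) n.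
Proof.
induction n as [|n IH]; first by rewrite big_geq.
rewrite big_nat_recr //= plus_INR IH //.
Qed.

Lemma inv_sq_bound0 m : rs (fun i => / (INR (S (S i)))^2) (S m) <= 3/4 - / INR (S (S m)).
Proof.
induction m as [|m IH].
- simpl. lra.
- change (rs (fun i => / (INR (S (S i)))^2) (S (S m))) with
    (rs (fun i => / (INR (S (S i)))^2) (S m) + / (INR (S (S (S m))))^2).
  assert (H : / INR (S (S (S m))) ^ 2 <= / INR (S (S m)) - / INR (S (S (S m)))).
  { rewrite !S_INR. pose proof (pos_INR m).
    apply Rle_trans with (/ ((INR m + 1 + 1) * (INR m + 1 + 1 + 1))).
    + apply Rinv_le_contravar. nra. nra.
    + right. field. lra. }
  lra.
Qed.

Lemma inv_sq_bound n : rs (fun i => / (INR (S (S i)))^2) n <= 3/4.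
Proof.
destruct n as [|m]. simpl; lra.
pose proof (inv_sq_bound0 m). assert (0 < / INR (S (S m))) by (apply Rinv_0_lt_compat, lt_0_INR; lia). lra.
Qed.

Lemma cube_tail n k : (1 <= n)%coq_nat ->
  rs zeta3_term (n + k) <= rs zeta3_term n + / INR n - / INR (n + k).
Proof.
intros Hn; induction k as [|k IH].
- rewrite addn0; lra.
- rewrite addnS; simpl rs.
  assert (H : zeta3_term (n + k) <= / INR (n + k) - / INR (S (n + k))).
  { unfold zeta3_term. rewrite S_INR.
    assert (1 <= INR (n + k)) by (apply (le_INR 1); lia).
    apply Rle_trans with (/ (INR (n + k) * (INR (n + k) + 1))).
    + apply Rinv_le_contravar. nra. simpl. nra.
    + right. field. lra. }
  lra.
Qed.

Section Zeta.
Variable z3 : R.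
Hypothesis Hz : infinite_sum zeta3_term z3.

Lemma rs_mono f n m : (forall i, 0 <= f i) -> (n <= m)%coq_nat -> rs f n <= rs f m.
Proof.
intros Hf H; induction H as [|m H IH]; [lra|]. simpl. specialize (Hf m). lra.
Qed.

Lemma zeta_pos i : 0 <= zeta3_term i.
Proof. unfold zeta3_term. apply Rlt_le, Rinv_0_lt_compat, pow_lt, lt_0_INR; lia. Qed.

Lemma z3_ge n : rs zeta3_term n <= z3.
Proof.
destruct (Rle_dec (rs zeta3_term n) z3) as [h|h]; [exact h|exfalso].
destruct (Hz (rs zeta3_term n - z3)) as [M HM]; [lra|].
specialize (HM (max M n) (Nat.le_max_l _ _)).
rewrite <- rs_sum in HM. unfold R_dist in HM.
assert (rs zeta3_term n <= rs zeta3_term (S (max M n))).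
{ apply rs_mono. apply zeta_pos. lia. }
apply Rabs_def2 in HM. lra.
Qed.

Lemma z3_le n : (1 <= n)%coq_nat -> z3 <= rs zeta3_term n + / INR n.
Proof.
intros Hn.
destruct (Rle_dec z3 (rs zeta3_term n + / INR n)) as [h|h]; [exact h|exfalso].
destruct (Hz (z3 - (rs zeta3_term n + / INR n))) as [M HM]; [lra|].
specialize (HM (max M n) (Nat.le_max_l _ _)).
rewrite <- rs_sum in HM. unfold R_dist in HM.
pose proof (cube_tail n (S (max M n) - n) Hn) as T.
replace (n + (S (max M n) - n))%nat with (S (max M n)) in T by lia.
assert (0 < / INR (S (max M n))) by (apply Rinv_0_lt_compat, lt_0_INR; lia).
apply Rabs_def2 in HM. lra.
Qed.

Lemma z3_ge1 : 1 <= z3.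
Proof. pose proof (z3_ge 1). simpl in H. unfold zeta3_term in H. simpl in H. lra. Qed.

End Zeta.
Lemma rs_scal_r c f n : rs (fun i => f i * c) n = rs f n * c.
Proof. induction n as [|n IH]; simpl; [ring|]. rewrite IH; ring. Qed.

Section Main.
Variable z3 : R.
Hypothesis Hz : infinite_sum zeta3_term z3.

Definition dd (n : nat) : R := INR (P n) - INR n ^ 3 / (6 * z3).

Lemma y_bounds N i :
  0 <= INR (N %/ i.+1) /\ INR (N %/ i.+1) <= INR N / INR i.+1 /\ INR N / INR i.+1 - 1 < INR (N %/ i.+1).
Proof.
have E := divn_eq N i.+1.
have Hr : (N %% i.+1 < i.+1)%nat by rewrite ltn_mod.
have Er : INR N = INR (N %/ i.+1) * INR i.+1 + INR (N %% i.+1).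
  by rewrite {1}E plus_INR mult_INR.
have Hr' : INR (N %% i.+1) < INR i.+1 by apply lt_INR; apply/ltP.
have Hi : 0 < INR i.+1 by apply lt_0_INR; lia.
have H0 : 0 <= INR (N %% i.+1) by apply pos_INR.
split; [apply pos_INR|split].
- apply Rmult_le_reg_r with (INR i.+1) => //. field_simplify; lra.
- apply Rmult_lt_reg_r with (INR i.+1) => //. field_simplify; lra.
Qed.

Lemma E_bound N : (1 <= N)%coq_nat ->
  Rabs (rs (fun i => dd (N %/ i.+1)) N) <= 2 * INR N ^ 2.
Proof.
move=> HN.
have z1 := z3_ge1 z3 Hz.
have HN' : 1 <= INR N by apply (le_INR 1).
rewrite /dd rs_minus -INR_sum stepD'.
have T6' : INR (T N) = (INR N ^ 3 + 3 * INR N ^ 2 + 2 * INR N) / 6.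
  have := T6 N; move/(f_equal INR); rewrite !mult_INR !S_INR /= => H.
  field_simplify; lra.
set Y := rs _ N.
have Yup : Y <= INR N ^ 3 * z3 / (6 * z3).
  rewrite /Y /Rdiv (rs_scal_r (/(6*z3)) (fun i => INR (N %/ i.+1) ^ 3)).
  apply Rmult_le_compat_r; first by apply Rlt_le, Rinv_0_lt_compat; lra.
  apply: Rle_trans (rs_le _ (fun i => INR N ^ 3 * zeta3_term i) _ _) _.
    move=> i Hi.
    have [y0 [y1 _]] := y_bounds N i.
    rewrite /zeta3_term.
    have -> : INR N ^ 3 * / INR i.+1 ^ 3 = (INR N / INR i.+1) ^ 3.
      by field; apply not_0_INR.
    apply pow_incr; lra.
  rewrite rs_scal.
  apply Rmult_le_compat_l; first by apply pow_le; lra.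
  exact: (z3_ge z3 Hz).
have Ylow : (INR N ^ 3 * z3 - 7 * INR N ^ 2) / (6 * z3) <= Y.
  rewrite /Y /Rdiv (rs_scal_r (/(6*z3)) (fun i => INR (N %/ i.+1) ^ 3)).
  apply Rmult_le_compat_r; first by apply Rlt_le, Rinv_0_lt_compat; lra.
  eapply Rle_trans; last first.
    apply (rs_le (fun i => INR N ^ 3 * zeta3_term i - 3 * INR N ^ 2 * / INR i.+1 ^ 2)).
    2: { 
    rewrite rs_minus rs_scal rs_scal.
    have zl := z3_le z3 Hz N HN.
    have q74 : rs (fun i => / INR i.+1 ^ 2) N <= 7/4.
      clear -HN; case: N HN => [|m] Hm; first lia.
      rewrite rs_shift; have := inv_sq_bound m; have -> : / INR 1 ^ 2 = 1 by simpl; field. 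
      lra.
    have Np : 0 < INR N by lra.
    have : INR N ^ 3 * (z3 - / INR N) <= INR N ^ 3 * rs zeta3_term N.
      apply Rmult_le_compat_l; [apply pow_le; lra | lra].
    have -> : INR N ^ 3 * (z3 - / INR N) = INR N ^ 3 * z3 - INR N ^ 2 by field; lra.
    have : 3 * INR N ^ 2 * rs (fun i => / INR i.+1 ^ 2) N <= 3 * INR N ^ 2 * (7/4).
      apply Rmult_le_compat_l; [nra | lra].
    intros; nra. }
  move=> i Hi.
  have [y0 [y1 y2]] := y_bounds N i.
  have Hi1 : 0 < INR i.+1 by apply lt_0_INR; lia.
  have Hx : 1 <= INR N / INR i.+1.
    apply Rmult_le_reg_r with (INR i.+1) => //; field_simplify; try lra.
    apply le_INR; lia.
  rewrite /zeta3_term.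
  have -> : INR N ^ 3 * / INR i.+1 ^ 3 - 3 * INR N ^ 2 * / INR i.+1 ^ 2 =
     (INR N / INR i.+1) ^ 3 - 3 * (INR N / INR i.+1) ^ 2 by field; lra.
  set x := INR N / INR i.+1 in Hx y1 y2 *.
  apply Rle_trans with ((x - 1) ^ 3).
    have -> : (x - 1) ^ 3 = x ^ 3 - 3 * x ^ 2 + 3 * x - 1 by ring.
    lra.
  apply pow_incr; lra.
rewrite T6'.
have Np : 0 < INR N by lra.
have Hfrac : INR N ^ 3 * z3 / (6 * z3) = INR N ^ 3 / 6 by field; lra.
have Hfrac2 : (INR N ^ 3 * z3 - 7 * INR N ^ 2) / (6 * z3) = INR N ^ 3 / 6 - 7 * INR N ^ 2 / (6 * z3) by field; lra.
have H7 : 7 * INR N ^ 2 / (6 * z3) <= 7 * INR N ^ 2 / 6.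
  apply Rmult_le_compat_l; first nra.
  apply Rinv_le_contravar; lra.
have H7' : 0 <= 7 * INR N ^ 2 / (6 * z3).
  apply Rmult_le_pos; first nra. apply Rlt_le, Rinv_0_lt_compat; lra.
apply Rabs_le; split; nra.
Qed.

Lemma dd_bound : forall n N, (N <= n)%coq_nat -> Rabs (dd N) <= 8 * INR N ^ 2.
Proof.
elim=> [|n IH] N HNn.
  have -> : N = 0%nat by lia.
  rewrite /dd P0 /=; rewrite Rabs_right; lra.
case: N HNn => [|m] HNn.
  rewrite /dd P0 /=; rewrite Rabs_right; lra.
have HE := E_bound m.+1 ltac:(lia).
rewrite rs_shift divn1 in HE.
have HR : Rabs (rs (fun i => dd (m.+1 %/ i.+2)) m) <= 6 * INR m.+1 ^ 2.
  apply: Rle_trans (rs_abs _ _) _.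
  apply Rle_trans with (rs (fun i => 8 * INR m.+1 ^ 2 * / INR i.+2 ^ 2) m).
    apply rs_le => i Hi.
    have Hlt : (m.+1 %/ i.+2 < m.+1)%nat by rewrite ltn_Pdiv.
    have := IH (m.+1 %/ i.+2) ltac:(move/ltP: Hlt; lia).
    have [y0 [y1 _]] := y_bounds m.+1 i.+1.
    have Hi2 : 0 < INR i.+2 by apply lt_0_INR; lia.
    have -> : 8 * INR m.+1 ^ 2 * / INR i.+2 ^ 2 = 8 * (INR m.+1 / INR i.+2) ^ 2 by field; lra.
    move=> h; apply: Rle_trans h _.
    apply Rmult_le_compat_l; first lra.
    apply pow_incr; lra.
  rewrite rs_scal.
  have := inv_sq_bound m.
  have : 0 <= 8 * INR m.+1 ^ 2 by apply Rmult_le_pos; [lra | apply pow_le, pos_INR].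
  move=> h1 h2; apply: Rle_trans (Rmult_le_compat_l _ _ _ h1 h2) _; lra.
have Ht := Rabs_triang (dd m.+1 + rs (fun i => dd (m.+1 %/ i.+2)) m) (- rs (fun i => dd (m.+1 %/ i.+2)) m).
rewrite Rabs_Ropp in Ht.
have -> : dd m.+1 = dd m.+1 + rs (fun i => dd (m.+1 %/ i.+2)) m + - rs (fun i => dd (m.+1 %/ i.+2)) m by ring.
lra.
Qed.

End Main.

Local Close Scope R_scope.

Theorem theorem4 :
  forall z3 : R, infinite_sum zeta3_term z3 ->
  exists C : R, forall N : nat, (2 <= N)%N ->
    (Rabs (INR (\sum_(1 <= k < N.+1) totient k * farey_index N 1 k)%N
          - pow (INR N) 3 / (6 * z3))
    <= C * (pow (INR N) 3 / ln (INR N)))%R.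
Proof.
move=> z3 Hz; exists 9%R => N HN.
Local Open Scope R_scope.
rewrite stepA; last by apply: leq_trans HN.
have HD := dd_bound z3 Hz N N (le_n N).
rewrite /dd in HD.
have HPhi : INR (Phi N) <= INR N ^ 2.
  have := Phi_le N => /leP/le_INR; rewrite mult_INR /=; lra.
have Np : 2 <= INR N by apply (le_INR 2); apply/leP.
have l0 : 0 < ln (INR N) by rewrite -ln_1; apply ln_increasing; lra.
have lN : ln (INR N) < INR N.
  have := exp_ineq1 (ln (INR N)) ltac:(lra); rewrite exp_ln; lra.
have Hq : INR N ^ 2 <= INR N ^ 3 / ln (INR N).
  apply Rmult_le_reg_r with (ln (INR N)) => //.
  rewrite /Rdiv Rmult_assoc Rinv_l; last lra.
  have : 0 < INR N ^ 2 by apply pow_lt; lra.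
  simpl; nra.
rewrite plus_INR.
have Ht := Rabs_triang (INR (P N) - INR N ^ 3 / (6 * z3)) (INR (Phi N)).
rewrite (Rabs_right (INR (Phi N))) in Ht; last by apply Rle_ge, pos_INR.
have -> : INR (P N) + INR (Phi N) - INR N ^ 3 / (6 * z3) = INR (P N) - INR N ^ 3 / (6 * z3) + INR (Phi N) by ring.
lra.
Qed.
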